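(* Let $G$ be a strongly regular graph with parameters $(n,d,\lambda,\mu)$ and restricted eigenvalues $r>s$, and suppose that the clique number satisfies $\omega(G)=1-d/s$. Let $m$ be the number of edges of $G$, let $\theta_1\ge\theta_2\ge\cdots\ge\theta_n$ be the eigenvalues of its adjacency matrix, let $n^+$ be the number of positive eigenvalues, write $\omega=\omega(G)$, and let $\ell=\min(n^+,\omega)$. Then \[ \theta_1^2+\theta_2^2+\cdots+\theta_\ell^2\le \frac{2m(\omega-1)}{\omega}. \]
   Context: A strongly regular graph with parameters $(n,d,\lambda,\mu)$ is a $d$-regular graph on $n$ vertices in which every pair of adjacent vertices has exactly $\lambda$ common neighbours and every pair of distinct non-adjacent vertices has exactly $\mu$ common neighbours. Its restricted eigenvalues $r>s$ are the adjacency eigenvalues other than the degree $d$ (those with eigenvectors orthogonal to the all-ones vector). Here $\mu$ denotes the SRG parameter, not an eigenvalue. *)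

(* Defs.v *)
From HB Require Import structures.
From mathcomp Require Import all_boot all_order all_algebra.
Set Implicit Arguments. Unset Strict Implicit. Unset Printing Implicit Defensive.
Import Order.TTheory GRing.Theory Num.Theory.
Local Open Scope ring_scope.

Definition simple_graph (n : nat) (e : rel 'I_n) : Prop :=
  symmetric e /\ irreflexive e.

Definition common_nbrs (n : nat) (e : rel 'I_n) (x y : 'I_n) : nat :=
  #|[set z | e x z && e y z]|.

Definition degree (n : nat) (e : rel 'I_n) (x : 'I_n) : nat := #|[set z | e x z]|.

Definition srg (n : nat) (e : rel 'I_n) (d lam mu : nat) : Prop :=
  [/\ simple_graph e,
      (forall x, degree e x = d),
      (forall x y, e x y -> common_nbrs e x y = lam) &
      (forall x y, x != y -> ~~ e x y -> common_nbrs e x y = mu)]%N.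

Definition adj_mx (R : nzRingType) (n : nat) (e : rel 'I_n) : 'M[R]_n :=
  \matrix_(i, j) (e i j)%:R.

Definition restricted_eigenvalue (R : fieldType) (n : nat) (e : rel 'I_n) (t : R) : Prop :=
  exists v : 'rV[R]_n, [/\ v != 0, v *m adj_mx R e = t *: v & v *m (const_mx 1 : 'cV[R]_n) = 0].

Definition is_clique (n : nat) (e : rel 'I_n) (K : {set 'I_n}) : bool :=
  [forall x in K, forall y in K, (x != y) ==> e x y].

Definition clique_number (n : nat) (e : rel 'I_n) : nat :=
  \max_(K : {set 'I_n} | is_clique e K) #|K|.

Definition num_edges (n : nat) (e : rel 'I_n) : nat :=
  #|[set K : {set 'I_n} | (#|K| == 2)%N && is_clique e K]|.

Definition sorted_spectrum (R : rcfType) (n : nat) (e : rel 'I_n) (s : seq R) : Prop :=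
  sorted (fun x y => y <= x) s /\
  char_poly (adj_mx R e) = \prod_(x <- s) ('X - x%:P).

(* Main.v *)
Require Import Defs.
From HB Require Import structures.
From mathcomp Require Import all_boot all_order all_algebra.
From mathcomp Require Import ring lra zify.
Import Order.TTheory GRing.Theory Num.Theory.
Set Implicit Arguments. Unset Strict Implicit.

Lemma edges2 n (e : rel 'I_n) d : symmetric e -> irreflexive e ->
  (forall x, degree e x = d) -> (2 * num_edges e = n * d)%N.
Proof.
move=> sym irr deg.
have H1 : (\sum_(p : 'I_n * 'I_n | e p.1 p.2) 1 = n * d)%N.
  rewrite -(pair_big_dep xpredT (fun x y => e x y) (fun _ _ => 1%N)) /=.
  transitivity (\sum_(x : 'I_n) d)%N; last by rewrite sum_nat_const card_ord mulnC.
  apply: eq_bigr => x _; rewrite -(deg x) /degree cardsE -sum1_card.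
  by apply: eq_bigl => y.
set E := [set K : {set 'I_n} | (#|K| == 2)%N && is_clique e K].
rewrite (partition_big (fun p : 'I_n * 'I_n => [set p.1; p.2]) (fun K => K \in E)) /= in H1; last first.
  move=> [a b] /= eab; rewrite inE cards2.
  have -> : (a != b) by apply: contraTneq eab => ->; rewrite irr.
  apply/forallP => x; apply/implyP => /set2P Hx; apply/forallP => y; apply/implyP => /set2P Hy.
  by case: Hx => ->; case: Hy => ->; rewrite ?eqxx //= ?eab ?(sym b a) ?eab ?implybT.
rewrite -H1 /num_edges -/E mulnC -sum_nat_const.
apply: eq_bigr => K; rewrite inE => /andP [/cards2P [x [y [nxy ->]]] cl].
have exy : e x y.
  by move/forallP: cl => /(_ x) /implyP /(_ (set21 _ _)) /forallP /(_ y) /implyP /(_ (set22 _ _)) /implyP /(_ nxy).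
have nxy2 : (x, y) != (y, x).
  by apply/negP => /eqP [E1 _]; rewrite E1 eqxx in nxy.
rewrite -[2%N]/((true).+1) -nxy2 -card2 -sum1_card; apply: eq_bigl => -[a b] /=.
rewrite !inE /=; apply/idP/idP; last first.
  move=> /andP [eab /eqP S].
  have ha : a \in [set x; y] by rewrite -S set21.
  have hb : b \in [set x; y] by rewrite -S set22.
  have nab : a != b by apply: contraTneq eab => ->; rewrite irr.
  by case/set2P: ha => Ha; case/set2P: hb => Hb; subst; rewrite ?eqxx ?orbT //; rewrite irr in eab.
by case/orP => /eqP [-> ->]; [rewrite exy eqxx | rewrite sym exy setUC eqxx].
Qed.

Local Open Scope ring_scope.

Lemma horner_char_poly (F : comNzRingType) n (A : 'M[F]_n) a :
  (char_poly A).[a] = \det (a%:M - A).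
Proof.
rewrite horner_sum; apply: eq_bigr => s _.
rewrite hornerM horner_exp !hornerE; congr (_ * _).
rewrite (big_morph _ (fun p q => hornerM p q a) (hornerC 1 a)).
by apply: eq_bigr => i _; rewrite !mxE !(hornerE, hornerMn).
Qed.

Lemma coef_prodX (F : comNzRingType) (s : seq F) :
  ('X * \prod_(x <- s) ('X - x%:P))`_(size s) = - \sum_(x <- s) x.
Proof.
elim: s => [|x d IHd].
  by rewrite !big_nil mulr1 coefX oppr0.
rewrite !big_cons coefXM mulrBl coefB IHd opprD addrC; congr (- _ + _).
rewrite mul_polyC coefZ [size _]/= -(size_prod_XsubC _ id) -lead_coefE.
by rewrite (monicP _) ?monic_prod_XsubC ?mulr1.
Qed.

Lemma coef_prod1 (F : comNzRingType) (s : seq F) : (0 < size s)%N ->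
  (\prod_(x <- s) ('X - x%:P))`_(size s).-1 = - \sum_(x <- s) x.
Proof.
move=> Hs; rewrite -coef_prodX coefXM; case: (size s) Hs => //.
Qed.

Lemma prod_pm (F : comNzRingType) (s : seq F) x :
  (\prod_(t <- s) (x - t)) * (\prod_(t <- s) (- x - t)) =
  (-1) ^+ size s * \prod_(t <- s) (x ^+ 2 - t ^+ 2).
Proof.
elim: s => [|t s IH]; first by rewrite !big_nil /= !mulr1.
rewrite !big_cons /= exprS.
transitivity (((x - t) * (- x - t)) * ((\prod_(t <- s) (x - t)) * (\prod_(t <- s) (- x - t)))).
  ring.
rewrite IH; ring.
Qed.

Lemma cp_sq (R : rcfType) n (A : 'M[R]_n) (theta : seq R) :
  char_poly A = \prod_(t <- theta) ('X - t%:P) ->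
  char_poly (A *m A) = \prod_(t <- theta) ('X - (t ^+ 2)%:P).
Proof.
move=> HA.
have Hsz : size theta = n.
  by have := size_char_poly A; rewrite HA size_prod_XsubC => -[].
have key : forall x : R, (char_poly (A *m A)).[x ^+ 2] =
    (\prod_(t <- theta) ('X - (t ^+ 2)%:P)).[x ^+ 2].
  move=> x.
  have E1 : (char_poly A).[x] * (char_poly A).[- x] =
      (-1) ^+ n * (char_poly (A *m A)).[x ^+ 2].
    rewrite !horner_char_poly -det_mulmx.
    have -> : (x%:M - A) *m ((- x)%:M - A) = (-1) *: ((x ^+ 2)%:M - A *m A).
      rewrite mulmxBl !mulmxBr -!scalar_mxM mul_mx_scalar mul_scalar_mx.
      idtac.
      apply/matrixP => i j; rewrite !mxE; ring.
    by rewrite detZ.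
  have E2 : (char_poly A).[x] * (char_poly A).[- x] =
      (-1) ^+ n * (\prod_(t <- theta) ('X - (t ^+ 2)%:P)).[x ^+ 2].
    rewrite HA !horner_prod.
    under eq_bigr do rewrite hornerXsubC.
    under [X in _ * X = _]eq_bigr do rewrite hornerXsubC.
    rewrite prod_pm Hsz; congr (_ * _).
    by apply: eq_bigr => t _; rewrite !hornerE.
  apply: (@mulrI _ ((-1) ^+ n)); first by rewrite unitrX // unitrN unitr1.
  by rewrite -E1 -E2.
apply/eqP; rewrite -subr_eq0; apply/eqP.
apply: (@roots_geq_poly_eq0 _ _ [seq i%:R | i <- iota 0 n.+2]).
- apply/allP => y /mapP [i _ ->]; rewrite /root hornerD hornerN.
  have -> : (i%:R : R) = (Num.sqrt i%:R) ^+ 2 by rewrite sqr_sqrtr ?ler0n.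
  by rewrite key subrr.
- rewrite map_inj_uniq ?iota_uniq // => i j /eqP; rewrite eqr_nat => /eqP.
  done.
- rewrite size_map size_iota.
  apply: leq_trans (size_polyD _ _) _.
  by rewrite size_polyN size_char_poly size_prod_XsubC Hsz maxnn.
Qed.

Lemma sum_bool_card (R : nzRingType) (T : finType) (b : pred T) :
  \sum_(z : T) ((b z)%:R : R) = (#|[set z | b z]|)%:R.
Proof.
rewrite cardsE -sumr_const [in RHS]big_mkcond /=; apply: eq_bigr => z _; rewrite unfold_in.
by case: (b z).
Qed.

Lemma adj2E (R : nzRingType) n (e : rel 'I_n) x y : symmetric e ->
  (adj_mx R e *m adj_mx R e) x y = (common_nbrs e x y)%:R.
Proof.
move=> sym; rewrite mxE /common_nbrs -sum_bool_card; apply: eq_bigr => z _.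
by rewrite !mxE -natrM mulnb (sym z y).
Qed.

Lemma adj_tr (R : nzRingType) n (e : rel 'I_n) : irreflexive e ->
  \tr (adj_mx R e) = 0.
Proof.
move=> irr; rewrite /mxtrace big1 // => i _; by rewrite mxE irr.
Qed.

Lemma adj2_tr (R : nzRingType) n (e : rel 'I_n) d : symmetric e ->
  (forall x, degree e x = d) -> \tr (adj_mx R e *m adj_mx R e) = (n * d)%:R.
Proof.
move=> sym deg; rewrite /mxtrace.
under eq_bigr do rewrite adj2E // /common_nbrs.
have -> : ((n * d)%:R : R) = \sum_(i : 'I_n) (d%:R : R) by rewrite sumr_const card_ord natrM mulr_natl.
apply: eq_bigr => i _.
rewrite -(deg i) /degree.
by under eq_finset do rewrite andbb.
Qed.

Lemma adj_ones (R : nzRingType) n (e : rel 'I_n) d :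
  (forall x, degree e x = d) ->
  adj_mx R e *m (const_mx 1 : 'cV[R]_n) = d%:R *: (const_mx 1).
Proof.
move=> deg; apply/matrixP => i j; rewrite !mxE mulr1 -(deg i) /degree -sum_bool_card.
by apply: eq_bigr => z _; rewrite !mxE mulr1.
Qed.

Lemma eigen_cases (R : fieldType) n (e : rel 'I_n) d (t : R) (v : 'rV[R]_n) :
  (forall x, degree e x = d) ->
  v != 0 -> v *m adj_mx R e = t *: v ->
  t = d%:R \/ restricted_eigenvalue e t.
Proof.
move=> deg vn0 Hv.
have [c0|cn0] := eqVneq (v *m (const_mx 1 : 'cV[R]_n)) 0.
  by right; exists v.
left.
have : (v *m adj_mx R e) *m (const_mx 1 : 'cV[R]_n) = v *m (adj_mx R e *m const_mx 1).
  by rewrite mulmxA.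
rewrite (adj_ones R deg) Hv -scalemxAl -scalemxAr => /eqP.
rewrite -subr_eq0 -scalerBl scaler_eq0 (negbTE cn0) orbF subr_eq0.
by move/eqP.
Qed.

Lemma srg_common n (e : rel 'I_n) d lam mu : srg e d lam mu ->
  exists mu' : nat, (mu' <= d)%N /\ forall x y,
    common_nbrs e x y = if x == y then d else if e x y then lam else mu'.
Proof.
case=> [[sym irr] deg Hl Hm].
have Hxx : forall x, common_nbrs e x x = d.
  move=> x; rewrite -(deg x) /common_nbrs /degree.
  by under eq_finset do rewrite andbb.
case: (boolP [exists x, exists y, (x != y) && ~~ e x y]) => [/existsP [x /existsP [y /andP [nxy nexy]]]|H].
  exists mu; split.
    rewrite -(Hm x y nxy nexy) -(deg x); apply: subset_leq_card.
    by apply/subsetP => z; rewrite !inE => /andP [].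
  move=> a b; case: eqVneq => [->|nab]; first exact: Hxx.
  case: (boolP (e a b)) => eab; first exact: Hl.
  exact: Hm.
exists 0%N; split => // a b; case: eqVneq => [->|nab]; first exact: Hxx.
case: (boolP (e a b)) => eab; first exact: Hl.
exfalso; move/negP: H; apply; apply/existsP; exists a; apply/existsP; exists b.
by rewrite nab eab.
Qed.

Lemma srg_mx (R : comNzRingType) n (e : rel 'I_n) d lam mu' :
  irreflexive e -> symmetric e ->
  (forall x y, common_nbrs e x y = if x == y then d else if e x y then lam else mu') ->
  adj_mx R e *m adj_mx R e =
    (lam%:R - mu'%:R) *: adj_mx R e + (d%:R - mu'%:R)%:M + mu'%:R *: const_mx 1.
Proof.
move=> irr sym Hc; apply/matrixP => x y.
rewrite adj2E // Hc !mxE.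
case: eqVneq => [->|nxy]; first by rewrite irr /=; ring.
case: (e x y) => /=; ring.
Qed.

Lemma quad (R : fieldType) n (e : rel 'I_n) d lam mu' (t : R) :
  irreflexive e -> symmetric e ->
  (forall x y, common_nbrs e x y = if x == y then d else if e x y then lam else mu') ->
  restricted_eigenvalue e t ->
  t ^+ 2 = (lam%:R - mu'%:R) * t + (d%:R - mu'%:R).
Proof.
move=> irr sym Hc [v [vn0 Hv Hv1]].
have J : (const_mx 1 : 'M[R]_n) = (const_mx 1 : 'cV[R]_n) *m (const_mx 1 : 'rV[R]_n).
  apply/matrixP => i j; rewrite !mxE big_ord1 !mxE; ring.
have : v *m (adj_mx R e *m adj_mx R e) = t ^+ 2 *: v.
  by rewrite mulmxA Hv -scalemxAl Hv scalerA expr2.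
rewrite (@srg_mx R n e d lam mu' irr sym Hc) mulmxDr mulmxDr -!scalemxAr Hv J mulmxA Hv1 mul0mx scaler0 addr0.
rewrite mul_mx_scalar scalerA -scalerDl => /eqP; rewrite -subr_eq0 -scalerBl scaler_eq0 (negbTE vn0) orbF.
by rewrite subr_eq0 => /eqP ->.
Qed.

Lemma sorted_pos (R : realDomainType) (s : seq R) :
  sorted (fun x y => y <= x) s ->
  forall i : nat, (i < count (fun x : R => (0 < x)%R) s)%N -> 0 < nth 0 s i.
Proof.
have tr : transitive (fun x y : R => y <= x).
  by move=> y x z h1 h2; exact: le_trans h2 h1.
elim: s => [|x s IH] //= Hs i.
have Hs' := path_sorted Hs.
have Hall := order_path_min tr Hs.
case: (ltrP 0 x) => hx /=.
  by case: i => [|i] //= Hi; apply: IH.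
have -> : count (fun x0 : R => 0 < x0) s = 0%N.
  apply/eqP; rewrite -leqn0 leqNgt -has_count; apply/hasPn => y /(allP Hall) /= hy.
  by rewrite -leNgt (le_trans hy hx).
by [].
Qed.

Lemma deg0_restr (R : fieldType) n (e : rel 'I_n) (t : R) :
  (forall x, degree e x = 0%N) -> restricted_eigenvalue e t -> t = 0.
Proof.
move=> deg [v [vn0 Hv _]].
have A0 : adj_mx R e = 0.
  apply/matrixP => x y; rewrite !mxE.
  have := cards0_eq (deg x) => /setP /(_ y); rewrite !inE => ->; by [].
move: Hv; rewrite A0 mulmx0 => /eqP; rewrite eq_sym scaler_eq0 (negbTE vn0) orbF.
by move/eqP.
Qed.

Lemma rv_nz (R : fieldType) n (v : 'rV[R]_n) : v != 0 -> exists j, v 0 j != 0.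
Proof.
move=> vn0; case: (pickP (fun j => v 0 j != 0)) => [j Hj|H]; first by exists j.
case/negP: vn0; apply/eqP/matrixP => i j; rewrite ord1 mxE.
by move: (H j) => /negbFE /eqP.
Qed.

Unset Implicit Arguments. Set Strict Implicit.

Theorem mainTheorem4 (R : rcfType) (n : nat) (e : rel 'I_n) (d lam mu : nat)
    (r s : R) (theta : seq R) :
  srg e d lam mu ->
  restricted_eigenvalue e r -> restricted_eigenvalue e s -> s < r ->
  (forall t : R, restricted_eigenvalue e t -> t = r \/ t = s) ->
  (clique_number e)%:R = 1 - d%:R / s ->
  sorted_spectrum e theta ->
  let m := num_edges e in
  let w := clique_number e in
  let npos := count (fun x => 0 < x) theta in
  let l := minn npos w in
  \sum_(i < l) (nth 0 theta i) ^+ 2 <= 2 * m%:R * (w%:R - 1) / w%:R.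
Proof.
move=> Hsrg Hr Hs srs Hrs Hw [Hsort Hcp]; cbv zeta.
set w := clique_number e in Hw *.
have [[sym irr] deg Hl _] := Hsrg.
have [mu' [mud Hc]] := srg_common Hsrg.
have qr := quad irr sym Hc Hr.
have qs := quad irr sym Hc Hs.
set D : R := d%:R in qr qs Hw *.
set L : R := lam%:R in qr qs.
set M : R := mu'%:R in qr qs.
have sum_rs : r + s = L - M.
  have E : (r - s) * (r + s - (L - M)) = (r ^+ 2 - ((L - M) * r + (D - M))) - (s ^+ 2 - ((L - M) * s + (D - M))) by ring.
  rewrite -{1}qr -{1}qs !subrr in E.
  move/eqP: E; rewrite mulf_eq0 subr_eq0 (gt_eqF srs) /= subr_eq0.
  by rewrite eq_sym => /eqP.
have prod_rs : r * s = M - D.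
  have E2 : r * s = r * (r + s) - r ^+ 2 by ring.
  rewrite E2 sum_rs qr; ring.
have [v [vn0 _ _]] := Hr.
have [x _] := rv_nz vn0.
have n0 : (0 < n)%N by case: x => x /= ?; apply: leq_ltn_trans (leq0n x) _.
have d0 : (0 < d)%N.
  rewrite lt0n; apply/eqP => d0.
  have deg0 : forall x, degree e x = 0%N by move=> z; rewrite deg d0.
  have := deg0_restr deg0 Hr; have := deg0_restr deg0 Hs => s0' r0.
  by move: srs; rewrite s0' r0 ltxx.
have [y exy] : exists y, e x y.
  have : (0 < #|[set z | e x z]|)%N by rewrite -/(degree e x) deg.
  by case/card_gt0P => y; rewrite inE => ?; exists y.
have lamd : (lam.+1 <= d)%N.
  rewrite -(Hl x y exy) -(deg x); apply: proper_card; apply/properP; split.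
    by apply/subsetP => z; rewrite !inE => /andP [].
  by exists y; rewrite !inE ?exy // irr andbF.
have w2 : (2 <= w)%N.
  have nxy : x != y by apply: contraTneq exy => ->; rewrite irr.
  rewrite -[2%N]/((true).+1) -nxy -cards2.
  apply: (@leq_bigmax_cond _ (fun K => is_clique e K) (fun K => #|K|) [set x; y]).
  apply/forallP => a; apply/implyP => /set2P Ha; apply/forallP => b; apply/implyP => /set2P Hb.
  by case: Ha => ->; case: Hb => ->; rewrite ?eqxx //= ?exy ?(sym y x) ?exy ?implybT.
have D0 : 0 < D by rewrite ltr0n.
have M0 : 0 <= M by rewrite ler0n.
have MD : M <= D by rewrite ler_nat.
have LD : L + 1 <= D by rewrite /L /D -(natrD R lam 1) ler_nat addn1.
have s0 : s < 0.
  rewrite lt_neqAle; apply/andP; split.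
    apply/eqP => s0; move: Hw; rewrite s0 invr0 mulr0 subr0 => Hw1.
    have : (w%:R : R) == 1%:R by rewrite Hw1.
    by rewrite eqr_nat => /eqP w1; rewrite w1 in w2.
  nra.
have r0 : 0 <= r by nra.
have rD : r <= D.
  have key : (D - r) * (D - s) = D * (D - 1 - L) + M * (D + 1).
    transitivity (D ^+ 2 - D * (r + s) + r * s); first by ring.
    rewrite sum_rs prod_rs; ring.
  have : 0 <= D * (D - 1 - L) + M * (D + 1).
    apply: addr_ge0; apply: mulr_ge0; lra.
  rewrite -key => H; nra.

have Hsz : size theta = n.
  by have := size_char_poly (adj_mx R e); rewrite Hcp size_prod_XsubC => -[].
have Hin : forall t, t \in theta -> t = D \/ t = r \/ t = s.
  move=> t Ht; have : root (char_poly (adj_mx R e)) t by rewrite Hcp root_prod_XsubC.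
  rewrite -eigenvalue_root_char => /eigenvalueP [u Hu un0].
  by case: (eigen_cases deg un0 Hu) => [->|/Hrs]; [left | right].
have sum1 : \sum_(t <- theta) t = 0.
  have := char_poly_trace (adj_mx R e) n0.
  have E := coef_prod1 (s := theta); rewrite Hsz in E.
  rewrite Hcp E ?Hsz // adj_tr // oppr0 => /eqP; rewrite oppr_eq0 => /eqP //.
have sum2 : \sum_(t <- theta) t ^+ 2 = (n * d)%:R.
  have := char_poly_trace (adj_mx R e *m adj_mx R e) n0.
  rewrite (cp_sq Hcp) (adj2_tr R sym deg).
  have -> : \prod_(t <- theta) ('X - (t ^+ 2)%:P) =
      \prod_(t <- map (fun t => t ^+ 2) theta) ('X - t%:P) by rewrite big_map.
  have E := coef_prod1 (s := map (fun t => t ^+ 2) theta); rewrite size_map Hsz in E.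
  rewrite E ?size_map ?Hsz // big_map => /eqP; rewrite eqr_opp => /eqP //.
have E2 := edges2 sym irr deg.
have sD : D - s != 0 by rewrite subr_eq0; apply/eqP => H; move: D0; rewrite H; lra.
have sn0 : s != 0 by rewrite lt_eqF.
have w0 : 1 - D / s != 0.
  apply/eqP => H; have : (1 - D / s) * s = 0 by rewrite H mul0r.
  rewrite mulrBl mul1r mulfVK //; apply/eqP; rewrite subr_eq0; apply/eqP => H2.
  by move: D0 s0; rewrite -H2 => ? ?; lra.
clearbody D.
set K := D / (D - s).
have -> : 2 * (num_edges e)%:R * (w%:R - 1) / w%:R = K * (n * d)%:R.
  rewrite -natrM E2 Hw /K; move: ((n * d)%:R : R) => N.
  field.
  by rewrite sD sn0 /= -oppr_eq0 opprB sD.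
set h := fun t : R => if 0 < t then t ^+ 2 else 0.
have h0 : forall t, 0 <= h t by move=> t; rewrite /h; case: ifP => // _; apply: sqr_ge0.
have hle : forall t, t \in theta -> h t <= K * (t * (t - s)).
  have key : forall t', 0 <= t' -> t' <= D -> h t' <= K * (t' * (t' - s)).
    move=> t' h1 h2.
    have E : K * (t' * (t' - s)) - t' ^+ 2 = (- s) * t' * (D - t') / (D - s).
      by rewrite /K; field.
    have : 0 <= K * (t' * (t' - s)) - t' ^+ 2.
      rewrite E; apply: divr_ge0; last lra.
      apply: mulr_ge0; [apply: mulr_ge0|]; lra.
    rewrite subr_ge0; apply: le_trans; rewrite /h; case: ifP => // _; apply: sqr_ge0.
  move=> t /Hin [->|[->|->]].
  - by apply: key; lra.
  - by apply: key; lra.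
  - by rewrite /h ltNge (ltW s0) /= subrr !mulr0.
have lsz : (minn (count (fun x : R => (0 < x)%R) theta) w <= size theta)%N.
  exact: leq_trans (geq_minl _ _) (count_size _ _).
apply: (@le_trans _ _ (\sum_(i < size theta) h theta`_i)).
  rewrite (big_ord_widen (size theta) (fun i => theta`_i ^+ 2) lsz).
  rewrite [X in _ <= X](bigID (fun i : 'I_ _ => (i < minn (count (fun x : R => (0 < x)%R) theta) w)%N)) /=.
  apply: ler_wpDr; first by apply: sumr_ge0 => i _.
  apply: ler_sum => i Hi; rewrite /h sorted_pos //.
  exact: leq_trans Hi (geq_minl _ _).
rewrite -(big_mkord xpredT (fun i => h theta`_i)) -(big_nth 0 xpredT h).
apply: (@le_trans _ _ (\sum_(t <- theta) K * (t * (t - s)))).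
  by rewrite big_seq [X in _ <= X]big_seq; apply: ler_sum => t Ht; apply: hle.
rewrite -mulr_sumr.
have -> : \sum_(t <- theta) t * (t - s) = (n * d)%:R.
  transitivity (\sum_(t <- theta) t ^+ 2 - s * \sum_(t <- theta) t); last first.
    by rewrite sum1 sum2 mulr0 subr0.
  by rewrite mulr_sumr -sumrB; apply: eq_bigr => t _; ring.
by [].
Qed.
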